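(* Fix a timestep $T$ and consider two spiking neurons $\hat\sigma^T$ and $\tilde\sigma^T$ (same threshold $u_{th}$) with the same temporal input $\tilde h^{T-1}=\hat h^{T-1}$ and spatial input features $\hat x^T,\tilde x^T$. Suppose $\hat u^T=\hat h^{T-1}+\hat x^T$ is a random variable whose distribution is a $u_{th}$-Neighborhood-Finite Distribution, and suppose $|\tilde x^T-\hat x^T|\le\epsilon$. Then the probability that the two neurons produce different outputs, $P[\hat\sigma^T(\hat x^T)\neq\tilde\sigma^T(\tilde x^T)]$, has an upper bound proportional to $\epsilon$ (i.e. it is at most a constant multiple of $\epsilon$, the constant depending only on the distribution of $\hat u^T$).
   Context: A Leaky Integrate-and-Fire (LIF) spiking neuron with firing threshold $u_{th}$, reset potential $V_{reset}$ and decay factor $\beta\in(0,1)$ receives spatial input features $x^1,x^2,\dots$ and evolves by $u^t=h^{t-1}+x^t$, $s^t=\mathrm{Hea}(u^t-u_{th})$, $h^t=V_{reset}s^t+\beta u^t(1-s^t)$, where $\mathrm{Hea}(y)=1$ if $y\ge 0$ and $0$ otherwise; $u^t$ is the membrane potential, $h^{t-1}$ the temporal input, and the output at timestep $t$ is written $\sigma^t(x^t)=s^t$. A probability density $p$ is an $m$-Neighborhood-Finite Distribution if there exists $\epsilon>0$ with $\sup_{x\in[m-\epsilon,m+\epsilon]}p(x)<+\infty$; a random variable follows such a distribution if its density does. *)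

(* Defs.v *)
From HB Require Import structures.
From mathcomp Require Import all_boot all_order all_algebra.
From mathcomp Require Import all_classical all_reals all_analysis.
Set Implicit Arguments. Unset Strict Implicit. Unset Printing Implicit Defensive.
Import Order.TTheory GRing.Theory Num.Theory.
Local Open Scope classical_set_scope.
Local Open Scope ring_scope.

Definition Hea (R : realType) (y : R) : R := if 0 <= y then 1 else 0.

Definition lif_u (R : realType) (h x : R) : R := h + x.

(* Spike output sigma^t(x^t) = s^t = Hea(u^t - u_th), given temporal input h^{t-1}. *)
Definition lif_spike (R : realType) (uth h x : R) : R := Hea (lif_u h x - uth).

Definition lif_h (R : realType) (uth Vreset beta h x : R) : R :=
  Vreset * lif_spike uth h x + beta * lif_u h x * (1 - lif_spike uth h x).

Definition is_density_of (R : realType) d (T : measurableType d)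
  (P : probability T R) (X : T -> R) (p : R -> R) : Prop :=
  measurable_fun setT p /\ (forall x, 0 <= p x) /\
  forall A : set R, measurable A ->
    P (X @^-1` A) = (\int[@lebesgue_measure R]_(x in A) (p x)%:E)%E.

Definition neighborhood_finite (R : realType) (p : R -> R) (m : R) : Prop :=
  exists2 eps : R, 0 < eps &
    exists M : R, forall x, m - eps <= x <= m + eps -> p x <= M.

(* Main.v *)
Require Import Defs.
From HB Require Import structures.
From mathcomp Require Import all_boot all_order all_algebra.
From mathcomp Require Import all_classical all_reals all_analysis.
From mathcomp Require Import ring lra.
Import Order.TTheory GRing.Theory Num.Theory.
Local Open Scope classical_set_scope.
Local Open Scope ring_scope.


Lemma hea_diff (R : realType) (u v uth eps : R) :
  `|v - u| <= eps -> Hea (u - uth) != Hea (v - uth) ->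
  uth - eps <= u <= uth + eps.
Proof.
rewrite /Hea ler_norml => /andP[a b].
have [h1|h1] := leP 0 (u - uth); have [h2|h2] := leP 0 (v - uth);
  rewrite ?eqxx // => _; apply/andP; split; lra.
Qed.

Theorem lemma2 (R : realType) (d : measure_display) (T : measurableType d)
  (P : probability T R) (uth : R) (uhat : T -> R) (p : R -> R) :
  measurable_fun setT uhat ->
  is_density_of P uhat p ->
  neighborhood_finite p uth ->
  exists C : R, 0 <= C /\
    forall (eps : R) (h xhat xtil : T -> R),
      0 <= eps ->
      measurable_fun setT h -> measurable_fun setT xhat -> measurable_fun setT xtil ->
      (forall w, lif_u (h w) (xhat w) = uhat w) ->
      (forall w, `|xtil w - xhat w| <= eps) ->
      (P [set w | lif_spike uth (h w) (xhat w) != lif_spike uth (h w) (xtil w)]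
         <= (C * eps)%:E)%E.
Proof.
move=> mu [mp [p0 dens]] [e0 e0pos [M HM]].
set M' := Num.max M 0.
have M'0 : 0 <= M' by rewrite /M' le_max lexx orbT.
have HM' : forall x, uth - e0 <= x <= uth + e0 -> p x <= M'.
  by move=> x /HM hx; rewrite /M' le_max hx.
exists (2 * M' + e0^-1); split.
  by apply: addr_ge0; [apply: mulr_ge0 | rewrite invr_ge0 ltW].
move=> eps h xhat xtil eps0 mh mxh mxt hu hx.
set S := [set w | _].
set a := fun w => uhat w - uth.
set b := fun w => h w + xtil w - uth.
have ma : measurable_fun setT a by apply: measurable_realfun.measurable_funB => //; exact: measurable_cst.
have mb : measurable_fun setT b.
  by apply: measurable_realfun.measurable_funB; [apply: measurable_realfun.measurable_funD|exact: measurable_cst].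
set A := a @^-1` `[0, +oo[.
set B := b @^-1` `[0, +oo[.
have mA : measurable A by rewrite -[A]setTI; apply: ma => //; exact: measurable_itv.
have mB : measurable B by rewrite -[B]setTI; apply: mb => //; exact: measurable_itv.
have SE : S = (A `&` ~` B) `|` (~` A `&` B).
  apply/seteqP; split => w; rewrite /S /A /B /a /b /= /lif_spike /Hea /lif_u -(hu w) /lif_u /= !in_itv /= !andbT;
  have [h1|h1] := leP 0 (h w + xhat w - uth); have [h2|h2] := leP 0 (h w + xtil w - uth);
  rewrite ?eqxx ?oner_neq0 ?(eq_sym 0) ?oner_neq0 //=.
  all: try by move=> _; left.
  all: try by move=> _; right.
  all: try by case => -[].
  all: try by case => -[] _ [].
have mS : measurable S.
  rewrite SE; apply: measurableU; apply: measurableI => //; exact: measurableC.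
have CE : (2 * M' + e0^-1) * eps = 2 * M' * eps + e0^-1 * eps by rewrite mulrDl.
have p1 : 0 <= 2 * M' * eps by rewrite mulr_ge0 // mulr_ge0.
have [epsle|epsgt] := leP eps e0; last first.
  have h1 : 1 <= e0^-1 * eps by rewrite mulrC ler_pdivlMr // mul1r ltW.
  apply: (le_trans (probability_le1 P mS)); rewrite lee_fin CE; lra.
set I := `[uth - eps, uth + eps]%classic.
have mI : measurable (I : set R) by exact: measurable_itv.
have mU : measurable (uhat @^-1` I) by rewrite -[_ @^-1` _]setTI; apply: mu.
have sub : S `<=` uhat @^-1` I.
  move=> w; rewrite /S /= /lif_spike hu => hw.
  have := @hea_diff R (uhat w) (h w + xtil w) uth eps.
  rewrite /I /= in_itv /=; apply => //; rewrite -(hu w) /lif_u.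
  by rewrite (_ : h w + xtil w - (h w + xhat w) = xtil w - xhat w) ?hx //; ring.
apply: (le_trans (le_measure _ _ _ sub)); rewrite ?inE //.
apply: (@le_trans _ _ (\int[lebesgue_measure]_(x in I) (p x)%:E)%E); first by rewrite le_eqVlt; apply/orP; left; apply/eqP; apply: dens.
apply: le_trans; first apply: (@ge0_le_integral _ _ _ lebesgue_measure I mI (fun x => (p x)%:E) (fun _ => M'%:E)).
- move=> x _; by rewrite lee_fin.
- apply/measurable_realfun.measurable_EFinP; exact: measurable_funS mp.
- exact: measurable_cst.
- move=> x; rewrite /I /= in_itv /= => /andP[x1 x2]; rewrite lee_fin; apply: HM'; apply/andP; split; lra.
have LI : lebesgue_measure I = ((uth + eps) - (uth - eps))%:E.
  have := @lebesgue_measure_itv R `[uth - eps, uth + eps].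
  rewrite /= lte_fin => ->; case: ifP => [_|/negbT]; first by rewrite EFinB.
  rewrite -leNgt => hle; have -> : eps = 0 by lra.
  by rewrite !subr0 addr0 subrr.
rewrite integral_cst //.
apply: (@le_trans _ _ (M'%:E * ((uth + eps) - (uth - eps))%:E)%E).
  by rewrite le_eqVlt; apply/orP; left; apply/eqP; congr (_ * _)%E; apply: LI.
have p2 : 0 <= e0^-1 * eps by rewrite mulr_ge0 // invr_ge0 ltW.
  rewrite -EFinM lee_fin CE.
  rewrite (_ : M' * (uth + eps - (uth - eps)) = 2 * M' * eps); first lra.
  ring.
Qed.
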